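(* Let $\theta\in\mathbb{R}$, $\chi\in\mathbb{R}\setminus\{0\}$, $\tilde M=\begin{bmatrix}\cos\theta&\chi\sin\theta\\-\chi^{-1}\sin\theta&\cos\theta\end{bmatrix}$, let $n\ge0$ be an integer, $(q_0,p_0)\in\mathbb{R}^2$, $(q_n,p_n)^T=\tilde M^n(q_0,p_0)^T$, $H(q,p)=\frac12(p^2+q^2)$ and $\Delta(q_0,p_0)=H(q_n,p_n)-H(q_0,p_0)$. If $\chi^2\ge1$ then $\Delta(q_0,p_0)\le\frac12(\chi^2-1)p_0^2$; if $\chi^2\le1$ then $\Delta(q_0,p_0)\le\frac12(\chi^{-2}-1)q_0^2$. These bounds are uniform in $n$.
   Context: $\tilde M$ is the one-step matrix of a consistent reversible volume-preserving integrator applied with a stable step size $h$ to the harmonic oscillator $dq/dt=p$, $dp/dt=-q$ (there $\theta=\theta_h$, $\chi=\chi_h$). *)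

(* Defs.v *)
From Stdlib Require Import Reals Lra.
Open Scope R_scope.

(* 2x2 real matrices [[a b];[c d]] represented as ((a,b),(c,d)). *)
Definition mat2 : Type := ((R * R) * (R * R))%type.

Definition mat2_mul (A B : mat2) : mat2 :=
  let '((a, b), (c, d)) := A in
  let '((e, f), (g, h)) := B in
  ((a * e + b * g, a * f + b * h), (c * e + d * g, c * f + d * h)).

Definition mat2_id : mat2 := ((1, 0), (0, 1)).

Fixpoint mat2_pow (A : mat2) (n : nat) : mat2 :=
  match n with
  | O => mat2_id
  | S k => mat2_mul A (mat2_pow A k)
  end.

Definition mat2_app (A : mat2) (v : R * R) : R * R :=
  let '((a, b), (c, d)) := A in
  let '(x, y) := v in
  (a * x + b * y, c * x + d * y).

Definition Mtilde (theta chi : R) : mat2 :=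
  ((cos theta, chi * sin theta), (- (/ chi) * sin theta, cos theta)).

Definition Ham (v : R * R) : R := (1/2) * (snd v ^ 2 + fst v ^ 2).

Definition energy_drift (theta chi : R) (n : nat) (q0 p0 : R) : R :=
  Ham (mat2_app (mat2_pow (Mtilde theta chi) n) (q0, p0)) - Ham (q0, p0).

(* Main.v *)
Require Import Defs.
From Stdlib Require Import Reals Lra Psatz.
Open Scope R_scope.

Definition Inv (chi : R) (v : R * R) : R := fst v ^ 2 + chi ^ 2 * snd v ^ 2.

Lemma app_mul (A B : mat2) v : mat2_app (mat2_mul A B) v = mat2_app A (mat2_app B v).
Proof.
  destruct A as [[a b] [c d]]; destruct B as [[e f] [g h]]; destruct v as [x y].
  simpl. f_equal; ring.
Qed.

Lemma inv_M theta chi v : chi <> 0 -> Inv chi (mat2_app (Mtilde theta chi) v) = Inv chi v.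
Proof.
  intro H. destruct v as [x y]. unfold Inv, Mtilde; simpl.
  field_simplify; [|exact H].
  pose proof (sin2_cos2 theta) as E. unfold Rsqr in E.
  assert (E' : sin theta ^ 2 = 1 - cos theta ^ 2) by (simpl; lra).
  rewrite E'. field_simplify; try ring; try exact H.
Qed.

Lemma inv_pow theta chi n v : chi <> 0 ->
  Inv chi (mat2_app (mat2_pow (Mtilde theta chi) n) v) = Inv chi v.
Proof.
  intro H. induction n as [|n IH].
  - simpl; destruct v as [x y]; unfold Inv; simpl; f_equal; ring.
  - change (mat2_pow (Mtilde theta chi) (S n)) with (mat2_mul (Mtilde theta chi) (mat2_pow (Mtilde theta chi) n)).
    rewrite app_mul, inv_M by exact H. exact IH.
Qed.

Theorem proposition6p2 (theta chi : R) (Hchi : chi <> 0) (n : nat) (q0 p0 : R) :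
  (chi ^ 2 >= 1 -> energy_drift theta chi n q0 p0 <= (1/2) * (chi ^ 2 - 1) * p0 ^ 2) /\
  (chi ^ 2 <= 1 -> energy_drift theta chi n q0 p0 <= (1/2) * (/ (chi ^ 2) - 1) * q0 ^ 2).
Proof.
  pose proof (inv_pow theta chi n (q0, p0) Hchi) as I.
  unfold energy_drift, Ham.
  destruct (mat2_app (mat2_pow (Mtilde theta chi) n) (q0, p0)) as [x y].
  unfold Inv in I; simpl in *.
  assert (Hc : 0 < chi * chi) by (apply Rsqr_pos_lt; exact Hchi).
  split; intro Hk.
  - assert (0 <= y*y) by nra. nra.
  - assert (Hk' : chi * (chi * 1) <= 1) by exact Hk.
    assert (Hx : 0 <= x*x) by nra.
    assert (chi*chi*(x*x + y*y) <= q0*q0 + chi*chi*(p0*p0)) by nra.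
    replace (/ (chi * (chi * 1))) with (/ (chi*chi)) by (f_equal; ring).
    apply Rmult_le_reg_l with (chi*chi); [exact Hc|].
    field_simplify; [|lra]. field_simplify in H; nra.
Qed.
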